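(* Let $1\le p_1\le\cdots\le p_d\le n$ be integers and let $G_0=G_0(p_1,\ldots,p_d)$ be the $d$-uniform $d$-partite hypergraph with vertex classes $V_1,\ldots,V_d$, each identified with $[n]$, in which a $d$-tuple $(x_1,\ldots,x_d)\in[n]^d$ is a non-edge if and only if $x_{(i)}\ge p_i$ for every $1\le i\le d$. Then $W_n(p_1,\ldots,p_d)\ge \|G_0\|$, where $\|G_0\|$ is the number of edges of $G_0$; i.e., every weakly $K^d_{p_1,\ldots,p_d}$-saturated $d$-uniform $d$-partite hypergraph with $n$ vertices in each class has at least $\|G_0\|$ edges.
   Context: A $d$-uniform $d$-partite hypergraph has vertex classes $V_1,\ldots,V_d$ and edges that contain exactly one vertex from each class; only such $d$-sets are considered as possible edges. A copy of $K^d_{p_1,\ldots,p_d}$ in $H$ is a permutation $\pi:[d]\to[d]$ together with sets $S_i\subseteq V_i$, $|S_i|=p_{\pi(i)}$, such that all $d$-sets with one vertex from each $S_i$ are edges. $H$ is weakly $K^d_{p_1,\ldots,p_d}$-saturated if its non-edges can be added one at a time in some order so that each added edge creates a new copy of $K^d_{p_1,\ldots,p_d}$ containing that edge. $W_n(p_1,\ldots,p_d)$ is the minimum number of edges in a weakly $K^d_{p_1,\ldots,p_d}$-saturated such hypergraph with $n$ vertices in each class. For $x\in[n]^d$, $x_{(i)}$ is the $i$-th smallest entry of $x$ sorted with repetitions. *)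

(* Defs.v *)
From mathcomp Require Import all_boot all_fingroup.
Set Implicit Arguments. Unset Strict Implicit. Unset Printing Implicit Defensive.

(* A d-uniform d-partite hypergraph with vertex classes V_1..V_d, each
   identified with [n] (represented by 'I_n, value k standing for k+1). *)
Definition dtuple (d n : nat) := {ffun 'I_d -> 'I_n}.
Definition dhgraph (d n : nat) := {set dtuple d n}.

Definition copy_containing (d n : nat) (p : 'I_d -> nat)
    (E : dhgraph d n) (e : dtuple d n) : Prop :=
  exists (pi : 'S_d) (S : 'I_d -> {set 'I_n}),
    [/\ forall i, #|S i| = p (pi i),
        forall x : dtuple d n, (forall i, x i \in S i) -> x \in E
      & forall i, e i \in S i].

(* Weak saturation: the non-edges of E can be listed (each exactly once) in an
   order s such that adding each one, after those before it, creates a copy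
   of K^d_p containing it (such a copy is necessarily new). *)
Definition weakly_saturated (d n : nat) (p : 'I_d -> nat) (E : dhgraph d n)
    : Prop :=
  exists s : seq (dtuple d n),
    [/\ uniq s,
        forall x, (x \in s) = (x \notin E)
      & forall s1 x s2, s = s1 ++ x :: s2 ->
          copy_containing p (E :|: [set y in x :: s1]) x].

(* x_(i) for 1-based i: the i-th smallest entry of x (entries in [n],
   1-based), sorted with repetitions.  Here i : 'I_d is 0-based, so
   order_stat x i is x_(i+1). *)
Definition order_stat (d n : nat) (x : dtuple d n) (i : 'I_d) : nat :=
  nth 0 (sort leq [seq (nat_of_ord (x j)).+1 | j <- enum 'I_d]) i.

Definition G0 (d n : nat) (p : 'I_d -> nat) : dhgraph d n :=
  [set x : dtuple d n | ~~ [forall i, p i <= order_stat x i]].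
Arguments G0 : clear implicits.

(* Main.v *)
Require Import Defs.
From mathcomp Require Import all_boot all_fingroup all_order all_algebra.
From mathcomp Require Import ring.
Set Implicit Arguments. Unset Strict Implicit. Unset Printing Implicit Defensive.
Import Order.TTheory GRing.Theory Num.Theory.
Local Open Scope ring_scope.

Lemma inj_rank_le (k m : nat) (B : 'M[rat]_(k, m)) :
  (forall v : 'rV_k, v *m B = 0 -> v = 0) -> (k <= m)%N.
Proof.
move=> H.
have : row_free B.
  rewrite -kermx_eq0; apply/eqP/row_matrixP => i.
  rewrite row0; apply: H; by rewrite -row_mul mulmx_ker row0.
move/eqP => <-; exact: rank_leq_col.
Qed.

Section OneD.
Variable n : nat.
Definition wt (S : {set 'I_n}) (y : 'I_n) : rat :=
  \prod_(t in S :\ y) ((y : nat)%:R - (t : nat)%:R)^-1.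
Definition DD (S : {set 'I_n}) (h : 'I_n -> rat) : rat :=
  \sum_(y in S) h y * wt S y.

Lemma diff_neq0 (y t : 'I_n) : y != t -> (y : nat)%:R - (t : nat)%:R != 0 :> rat.
Proof. by move=> ne; rewrite subr_eq0 eqr_nat. Qed.

Lemma wt_neq0 S y : wt S y != 0.
Proof.
rewrite /wt; apply/prodf_neq0 => t; rewrite in_setD1 => /andP[ty _].
by rewrite invr_eq0 diff_neq0 // eq_sym.
Qed.

Lemma DD_lin S c h1 h2 : DD S (fun y => c * h1 y + h2 y) = c * DD S h1 + DD S h2.
Proof.
rewrite /DD mulr_sumr -big_split /=; apply: eq_bigr => y _; by rewrite mulrDl mulrA.
Qed.

Lemma DD_ext S h1 h2 : (forall y, h1 y = h2 y) -> DD S h1 = DD S h2.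
Proof. by move=> e; apply: eq_bigr => y _; rewrite e. Qed.

Lemma DD_shift (S : {set _}) (t : 'I_n) h : t \in S ->
  DD S (fun y => ((y : nat)%:R - (t : nat)%:R) * h y) = DD (S :\ t) h.
Proof.
move=> tS; rewrite /DD (bigD1 t) //= subrr !mul0r add0r.
apply: eq_big => [y|y]; first by rewrite in_setD1 andbC.
move=> /andP[yS yt].
rewrite /wt (bigD1 t) /=; last by rewrite in_setD1 tS eq_sym yt.
rewrite [_ * h y]mulrC -mulrA mulVKf ?diff_neq0 //; congr (_ * _).
apply: eq_bigl => u; rewrite !in_setD1; by case: (u != t); case: (u != y); case: (u \in S).
Qed.

Lemma DD_const S c : DD S (fun _ => c) = c * DD S (fun _ => 1).
Proof. by rewrite /DD mulr_sumr; apply: eq_bigr => y _; rewrite mul1r. Qed.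

Lemma DD1 k : forall S : {set 'I_n}, #|S| = k.+1 -> DD S (fun _ => 1) = (k == 0)%:R.
Proof.
elim: k => [|k IH] S hS.
  have /cards1P [t ->] : #|S| == 1%N by rewrite hS.
  by rewrite /DD big_set1 /wt setDv big_set0 mul1r.
have /set0Pn [t0 t0S] : S != set0 by rewrite -card_gt0 hS.
have h1 : #|S :\ t0| = k.+1 by rewrite (cardsD1 t0 S) t0S in hS; case: hS.
have /set0Pn [t1 t1S] : S :\ t0 != set0 by rewrite -card_gt0 h1.
move: (t1S); rewrite in_setD1 => /andP[t10 t1S'].
have h2 : #|S :\ t1| = k.+1 by rewrite (cardsD1 t1 S) t1S' in hS; case: hS.
have E : DD S (fun _ => (t1 : nat)%:R - (t0 : nat)%:R) = 0.
  rewrite (@DD_ext S _ (fun y => (-1) * (((y : nat)%:R - (t1 : nat)%:R) * 1)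
       + (((y : nat)%:R - (t0 : nat)%:R) * 1))); last by move=> y; rewrite !mulr1; ring.
  rewrite (DD_lin S (-1) (fun y => ((y : nat)%:R - (t1 : nat)%:R) * 1)
       (fun y => ((y : nat)%:R - (t0 : nat)%:R) * 1)).
  by rewrite !DD_shift // (IH _ h1) (IH _ h2) mulN1r addNr.
move: E; rewrite DD_const => /eqP; rewrite mulf_eq0 (negbTE (diff_neq0 t10)) /= => /eqP ->.
by [].
Qed.

Lemma DDpow a : forall S : {set 'I_n}, (a.+1 <= #|S|)%N ->
  DD S (fun y => (y : nat)%:R ^+ a) = (#|S| == a.+1)%:R.
Proof.
elim: a => [|a IH] S hS.
  rewrite (@DD_ext S _ (fun _ => 1)) ?expr0 //.
  by case: #|S| hS (@DD1 #|S|.-1 S) => // k _ ->.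
have /set0Pn [t0 t0S] : S != set0 by rewrite -card_gt0; apply: leq_trans hS.
have h1 : #|S :\ t0| = #|S|.-1 by rewrite (cardsD1 t0 S) t0S.
rewrite (@DD_ext S _ (fun y => (t0 : nat)%:R * ((y : nat)%:R ^+ a)
     + ((y : nat)%:R - (t0 : nat)%:R) * ((y : nat)%:R ^+ a))); last by move=> y; rewrite exprS; ring.
rewrite DD_lin DD_shift // IH ?IH.
- rewrite h1 (gtn_eqF hS) mulr0 add0r.
  by case: #|S| hS => // k _ /=.
- by rewrite h1 -ltnS (ltn_predK hS).
- exact: ltnW.
Qed.
End OneD.
Local Open Scope nat_scope.
Lemma card_count (T : finType) (P : pred T) : #|[set j | P j]| = count P (enum T).
Proof. rewrite cardE /enum_mem size_filter count_filter; apply: eq_count => j; by rewrite !inE andbT. Qed.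

Lemma card_lt_ord (d i : nat) : i <= d -> #|[set k : 'I_d | k < i]| = i.
Proof.
move=> hi.
have -> : [set k : 'I_d | k < i] = [set widen_ord hi k | k : 'I_i].
  apply/setP => k; rewrite inE; apply/idP/imsetP.
    by move=> ki; exists (Ordinal ki) => //; apply: val_inj.
  by case=> k' _ ->; rewrite /= ltn_ord.
rewrite card_imset ?card_ord //.
by move=> u v /(congr1 val) /= /val_inj.
Qed.

Lemma os_ge d n (x : dtuple d n) (i : 'I_d) v :
  #|[set j | (x j).+1 < v]| <= i -> v <= order_stat x i.
Proof.
move=> hc; rewrite leqNgt; apply/negP => hlt.
set s := [seq (nat_of_ord (x j)).+1 | j <- enum 'I_d].
set t := sort leq s.
have st : sorted leq t by apply: sort_sorted; exact: leq_total.
have szt : size t = d by rewrite size_sort size_map size_enum_ord.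
have ilt : i < size t by rewrite szt ltn_ord.
have allv : all (fun y => y < v) (take i.+1 t).
  apply/(all_nthP 0) => k; rewrite (size_takel ilt) => kl.
  rewrite nth_take //; apply: leq_ltn_trans hlt.
  by apply: (sorted_leq_nth leq_trans leqnn 0 st); rewrite ?inE // (leq_trans kl).
have : i.+1 <= count (fun y => y < v) t.
  rewrite -(cat_take_drop i.+1 t) count_cat.
  move: allv; rewrite all_count => /eqP ->; rewrite (size_takel ilt); exact: leq_addr.
have /seq.permP -> : perm_eq t s by rewrite /t perm_sort.
rewrite /s count_map -card_count.
move=> h; have := leq_trans h hc; by rewrite ltnn.
Qed.

Lemma pigeon d n (p : 'I_d -> nat) (hpmono : forall i j : 'I_d, i <= j -> p i <= p j)
  (pi : 'S_d) (x : dtuple d n) :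
  (forall j, p (pi j) <= (x j).+1) -> forall i, p i <= order_stat x i.
Proof.
move=> hx i; apply: os_ge.
rewrite -(card_lt_ord (ltnW (ltn_ord i))).
rewrite -(card_imset _ (@perm_inj _ pi)).
apply: subset_leq_card; apply/subsetP => k /imsetP [j]; rewrite inE => hj ->.
rewrite inE ltnNge; apply/negP => hij.
have := leq_trans (hpmono _ _ hij) (hx j); by rewrite leqNgt hj.
Qed.

Local Open Scope ring_scope.
Section Multi.
Variables d n : nat.
Definition mono (a x : dtuple d n) : rat := \prod_j ((x j : nat)%:R) ^+ (a j).
Definition WW (S : 'I_d -> {set 'I_n}) (x : dtuple d n) : rat := \prod_j wt (S j) (x j).
Definition DDD (S : 'I_d -> {set 'I_n}) (f : dtuple d n -> rat) : rat :=
  \sum_(x in family S) f x * WW S x.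

Lemma DDD_mono (S : 'I_d -> {set 'I_n}) a : DDD S (mono a) = \prod_j DD (S j) (fun y => (y : nat)%:R ^+ a j).
Proof.
rewrite /DD bigA_distr_big_dep /DDD; apply: eq_big => x.
  by [].
by move=> _; rewrite /mono /WW -big_split.
Qed.

Lemma DDD_sum k S (c : 'I_k -> rat) (g : 'I_k -> dtuple d n -> rat) :
  DDD S (fun x => \sum_i c i * g i x) = \sum_i c i * DDD S (g i).
Proof.
rewrite /DDD; under eq_bigr do rewrite mulr_suml.
rewrite exchange_big; apply: eq_bigr => i _; rewrite mulr_sumr.
by apply: eq_bigr => x _; rewrite mulrA.
Qed.

Lemma DDD_kill (S : 'I_d -> {set 'I_n}) (a : dtuple d n) j : ((a j).+2 <= #|S j|)%N -> DDD S (mono a) = 0.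
Proof.
move=> h; rewrite DDD_mono (bigD1 j) //= DDpow ?(ltnW h) //.
by rewrite (gtn_eqF h) mul0r.
Qed.

Lemma WW_neq0 (S : 'I_d -> {set 'I_n}) x : WW S x != 0.
Proof. by apply/prodf_neq0 => j _; exact: wt_neq0. Qed.

Lemma box_zero (S : 'I_d -> {set 'I_n}) (f : dtuple d n -> rat) x0 : x0 \in family S ->
  (forall y, y \in family S -> y != x0 -> f y = 0) -> DDD S f = 0 -> f x0 = 0.
Proof.
move=> hx0 hf; rewrite /DDD (bigD1 x0) //= big1 ?addr0.
  by move/eqP; rewrite mulf_eq0 (negbTE (WW_neq0 _ _)) orbF => /eqP.
by move=> y /andP[yS yx]; rewrite hf // mul0r.
Qed.
End Multi.

Lemma G0_kill d n (p : 'I_d -> nat) (hpmono : forall i j : 'I_d, (i <= j)%N -> (p i <= p j)%N)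
  (pi : 'S_d) (S : 'I_d -> {set 'I_n}) (a : dtuple d n) :
  (forall i, #|S i| = p (pi i)) -> a \in G0 d n p -> DDD S (mono a) = 0.
Proof.
move=> hS; rewrite inE => /forallPn [i hi].
have [j hj] : exists j, ((a j).+2 <= #|S j|)%N.
  apply/existsP; apply: contraR hi; rewrite negb_exists => /forallP hall.
  apply: (pigeon hpmono (pi := pi)) => j; rewrite -hS; move: (hall j).
  by rewrite -ltnNge ltnS.
exact: DDD_kill hj.
Qed.

Lemma lemma2_aux (d n : nat) (p : 'I_d -> nat)
    (hpmono : forall i j : 'I_d, (i <= j)%N -> (p i <= p j)%N) :
    forall E : dhgraph d n, weakly_saturated p E -> (#|G0 d n p| <= #|E|)%N.
Proof.
move=> E [s [us sE hs]].
pose e (i : 'I_#|G0 d n p|) : dtuple d n := enum_val i.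
pose q (j : 'I_#|E|) : dtuple d n := enum_val j.
pose B := \matrix_(i, j) mono (e i) (q j).
apply: (@inj_rank_le _ _ B) => v hv.
pose f x := \sum_i v 0 i * mono (e i) x.
have fE : forall y, y \in E -> f y = 0.
  move=> y yE.
  have := hv; move/matrixP => /(_ 0 (enum_rank_in yE y)).
  rewrite !mxE /= => <-; apply: eq_bigr => i _.
  by rewrite !mxE /q enum_rankK_in.
have Dkill : forall (pi : 'S_d) (S : 'I_d -> {set 'I_n}), (forall i, #|S i| = p (pi i)) -> DDD S f = 0.
  move=> pi S hS; rewrite /f DDD_sum big1 // => i _.
  by rewrite (G0_kill hpmono hS) ?mulr0 // /e enum_valP.
have fs : forall r, (r <= size s)%N -> forall y, y \in take r s -> f y = 0.
  elim=> [|r IH] hr y; first by rewrite take0.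
  set x := nth y s r.
  have hrs : (r < size s)%N by [].
  rewrite (take_nth y hrs) mem_rcons inE => /orP [/eqP ->|]; last exact: IH (ltnW hr) y.
  have := hs (take r s) x (drop r.+1 s).
  rewrite /x -drop_nth // cat_take_drop => /(_ erefl) [pi [S [hS hbox hx]]].
  apply: (@box_zero _ _ S); first by apply/familyP.
    move=> z /familyP zS zx; have := hbox z zS.
    rewrite !inE (negbTE zx) /= => /orP [/fE //|/IH]; apply; exact: ltnW.
  exact: Dkill hS.
have fall : forall y, f y = 0.
  move=> y; case: (boolP (y \in E)) => [/fE //|]; rewrite -sE => ys.
  apply: (fs (size s)) => //; by rewrite take_size.
apply/rowP => i0; rewrite mxE; apply/eqP; apply: contraT => hi0.
pose w (i : 'I_#|G0 d n p|) := (\sum_j (e i j : nat))%N.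
case: (@arg_maxnP _ i0 (fun i => v 0 i != 0) w hi0) => i1 hi1 hmax.
pose T j : {set 'I_n} := [set y : 'I_n | (y < (e i1 j).+1)%N].
have hT : forall j, #|T j| = (e i1 j).+1 by move=> j; rewrite card_lt_ord // ltn_ord.
have : DDD T f = 0 by rewrite /DDD big1 // => x _; rewrite fall mul0r.
rewrite /f DDD_sum (bigD1 i1) //= big1.
  rewrite addr0 DDD_mono big1 ?mulr1; first by move/eqP; rewrite (negbTE hi1).
  by move=> j _; rewrite DDpow hT ?eqxx.
move=> i ii1; case: (eqVneq (v 0 i) 0) => [->|vi]; first by rewrite mul0r.
have [j hj] : exists j, (e i j < e i1 j)%N.
  apply/existsP; apply: contraR ii1; rewrite negb_exists => /forallP hall.
  have hle : forall j, (e i1 j <= e i j)%N by move=> j; rewrite leqNgt hall.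
  have hm := hmax i vi.
  have h0 : (\sum_j (e i j - e i1 j) = 0)%N.
    by rewrite sumnB //; apply/eqP; rewrite subn_eq0.
  apply/eqP; apply: enum_val_inj; apply/ffunP => j; apply/val_inj/eqP.
  rewrite eqn_leq hle andbT -subn_eq0; apply/eqP.
  by move/eqP: h0; rewrite sum_nat_eq0 => /forallP /(_ j) /= /eqP.
change (v 0 i * DDD T (mono (e i)) = 0); rewrite DDD_mono (bigD1 j) //= DDpow hT; last by apply: leq_trans hj _.
by rewrite eqSS eq_sym (ltn_eqF hj) mul0r mulr0.
Qed.

Local Open Scope nat_scope.
Theorem lemma2 (d n : nat) (p : 'I_d -> nat)
  (hp1 : forall i, 1 <= p i)
  (hpmono : forall i j : 'I_d, i <= j -> p i <= p j)
  (hpn : forall i, p i <= n) :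
  forall E : dhgraph d n, weakly_saturated p E -> #|G0 d n p| <= #|E|.
Proof. exact: lemma2_aux hpmono. Qed.
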